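(* Let $d,m_0,n,m$ be nonnegative integers with $n\ge1$, $m\ge1$. Then $\mathcal{L}(d,m_0,n,m)$ is a quasi-homogeneous $(-1)$-class if and only if $(d,m_0,n,m)$ is one of: (a) $(2,0,5,1)$ or $(1,1,1,1)$; (b) $(e,e-1,2e,1)$ with $e\ge1$; (c) $\left(\frac{x+y+3m}{2},\frac{x-y+m}{2},\frac{x+2y-1}{m}+4,m\right)$ for some $m\ge2$ and integers $x,y\ge1$ with $xy=(m-1)(2m+1)$, $x+m\ge y$, $x-y\equiv m\pmod 2$, and $m\mid x+2y-1$.
   Context: $\mathcal{L}(d,m_0,n,m)$ denotes the class (linear system) of plane curves of degree $d$ with multiplicity $m_0$ at a general point $p_0$ and $m$ at general points $p_1,\dots,p_n$. Its self-intersection is $\mathcal{L}^2=d^2-m_0^2-nm^2$ and its genus $g$ is defined by $2g-2=d(d-3)-m_0(m_0-1)-nm(m-1)$. A quasi-homogeneous $(-1)$-class is such an $\mathcal{L}(d,m_0,n,m)$ with $\mathcal{L}^2=-1$ and $g=0$ (equivalently $d^2-m_0^2-nm^2=-1$ and $3d-m_0-nm=1$). *)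

(* Defs.v *)
From Stdlib Require Import ZArith Lia.
Open Scope Z_scope.

Definition self_int (d m0 n m : Z) : Z := d^2 - m0^2 - n * m^2.

Definition two_g_minus_two (d m0 n m : Z) : Z :=
  d * (d - 3) - m0 * (m0 - 1) - n * m * (m - 1).

(* Genus g, defined by 2g - 2 = two_g_minus_two (g may be a half-integer
   in general; we only need the predicate "g = 0"). *)
Definition genus_zero (d m0 n m : Z) : Prop := two_g_minus_two d m0 n m = -2.

Definition qh_minus1_class (d m0 n m : Z) : Prop :=
  self_int d m0 n m = -1 /\ genus_zero d m0 n m.

(* Main.v *)
Require Import Defs.
From Stdlib Require Import ZArith Lia.
Open Scope Z_scope.

Lemma qh_iff (d m0 n m : Z) :
  qh_minus1_class d m0 n m <->
  (d^2 - m0^2 - n*m^2 = -1 /\ 3*d - m0 - n*m = 1).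
Proof.
  unfold qh_minus1_class, self_int, genus_zero, two_g_minus_two.
  split; intros [H1 H2]; split; nia.
Qed.

Theorem proposition5p1 (d m0 n m : Z)
  (hd : 0 <= d) (hm0 : 0 <= m0) (hn : 1 <= n) (hm : 1 <= m) :
  qh_minus1_class d m0 n m <->
  ( ((d, m0, n, m) = (2, 0, 5, 1) \/ (d, m0, n, m) = (1, 1, 1, 1))
  \/ (exists e, 1 <= e /\ (d, m0, n, m) = (e, e - 1, 2 * e, 1))
  \/ (2 <= m /\ exists x y : Z,
        1 <= x /\ 1 <= y /\ x * y = (m - 1) * (2 * m + 1) /\ y <= x + m /\
        (x - y) mod 2 = m mod 2 /\ (m | x + 2 * y - 1) /\
        (d, m0, n, m) = ((x + y + 3 * m) / 2, (x - y + m) / 2,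
                         (x + 2 * y - 1) / m + 4, m)) ).
Proof.
  rewrite qh_iff. split.
  - intros [H1 H2].
    destruct (Z.eq_dec m 1) as [->|Hm1].
    + assert (Hp : (d - m0 - 1) * (d + m0 - 2) = 0) by nia.
      apply Z.mul_eq_0 in Hp as [Hp|Hp].
      * right; left. exists d. split; [lia|]. repeat f_equal; lia.
      * left. assert (n = 3*d - m0 - 1) by lia. assert (d = 2 /\ m0 = 0 \/ d = 1 /\ m0 = 1) as [[-> ->]|[-> ->]] by lia.
        -- left; repeat f_equal; lia.
        -- right; repeat f_equal; lia.
    + right; right. split; [lia|].
      exists (d + m0 - 2*m), (d - m0 - m).
      assert (Hxy : (d + m0 - 2*m) * (d - m0 - m) = (m - 1) * (2*m + 1)) by nia.
      assert (Hpos : 1 <= d + m0 - 2*m /\ 1 <= d - m0 - m).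
      { destruct (Z_lt_le_dec (d + m0 - 2*m) 1); destruct (Z_lt_le_dec (d - m0 - m) 1);
          try lia; try nia. }
      split; [lia|]. split; [lia|]. split; [exact Hxy|]. split; [lia|].
      split.
      { replace (d + m0 - 2 * m - (d - m0 - m)) with (m + (m0 - m) * 2) by ring.
        apply Z_mod_plus_full. }
      split.
      { exists (n - 4). nia. }
      replace (d + m0 - 2 * m + (d - m0 - m) + 3 * m) with (d * 2) by ring.
      replace (d + m0 - 2 * m - (d - m0 - m) + m) with (m0 * 2) by ring.
      replace (d + m0 - 2 * m + 2 * (d - m0 - m) - 1) with ((n - 4) * m) by nia.
      rewrite !Z.div_mul by lia. repeat f_equal; lia.
  - intros [[H|H]|[[e [He H]]|[Hm2 [x [y [Hx [Hy [Hxy [Hyx [Hmod [[j Hj] H]]]]]]]]]]];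
      try (rewrite !pair_equal_spec in H; destruct H as [[[H1' H2'] H3'] H4']; subst; split; lia).
    pose proof (Z_div_mod_eq_full (x - y) 2) as E1.
    pose proof (Z_div_mod_eq_full m 2) as E2.
    set (k := (x - y)/2 + m/2 + m mod 2).
    assert (Hk : x - y + m = k * 2) by (unfold k; lia).
    rewrite Hk, Hj in H.
    replace (x + y + 3 * m) with ((k + y + m) * 2) in H by lia.
    rewrite !Z.div_mul in H by lia.
    rewrite !pair_equal_spec in H; destruct H as [[[H1' H2'] H3'] H4']; subst.
    clearbody k. assert (x = 2*k + y - m) by lia. subst x.
    split; nia.
Qed.
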